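(* Let $\mathfrak{l}$ be a finite-dimensional restricted Lie algebra over an algebraically closed field $\mathbb{K}$ of characteristic $p$ with prime subfield $\mathbb{F}$, and let $\chi\in\mathfrak{l}^\ast$ be arbitrary. Then $u(\mathfrak{l}_\chi)$ is isomorphic as an algebra to $\bigoplus_{i\in\mathbb{F}}U_{i\chi}(\mathfrak{l})$.
   Context: $\mathfrak{l}_\chi=\mathfrak{l}\oplus\mathbb{K}c$ is the restricted Lie algebra with bracket $[a+\alpha c,b+\beta c]=[a,b]$ and $p$-map $(a+\alpha c)^{[p]}=a^{[p]}+(\chi(a)^p+\alpha^p)c$; $u(\cdot)$ is the restricted enveloping algebra. For $\xi\in\mathfrak{l}^\ast$, the reduced enveloping algebra $U_\xi(\mathfrak{l})$ is the quotient of the universal enveloping algebra $U(\mathfrak{l})$ by the ideal generated by $x^p-x^{[p]}-\xi(x)^p\cdot 1$ for all $x\in\mathfrak{l}$. *)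

(* Defs.v *)
From HB Require Import structures.
From mathcomp Require Import all_boot all_order all_algebra.
Set Implicit Arguments. Unset Strict Implicit. Unset Printing Implicit Defensive.
Import Order.TTheory GRing.Theory.
Local Open Scope ring_scope.

Section RestrictedLie.
Variables (K : fieldType) (p : nat) (V : vectType K).

Definition is_lie_bracket (br : V -> V -> V) : Prop :=
  [/\ (forall a x y z, br (a *: x + y) z = a *: br x z + br y z),
      (forall a x y z, br z (a *: x + y) = a *: br z x + br z y),
      (forall x, br x x = 0) &
      (forall x y z, br x (br y z) + br y (br z x) + br z (br x y) = 0)].

Definition ad_word (br : V -> V -> V) (x y : V) (w : {ffun 'I_p.-1 -> bool}) : V :=
  foldr (fun u acc => br u acc) x [seq (if w j then x else y) | j <- enum 'I_p.-1].

(** Jacobson's s_i(x,y), 1 <= i <= p-1, defined by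
    ad(t x + y)^(p-1)(x) = \sum_i i s_i(x,y) t^(i-1). *)
Definition jacobson_s (br : V -> V -> V) (i : nat) (x y : V) : V :=
  (i%:R)^-1 *: \sum_(w : {ffun 'I_p.-1 -> bool} | count id (fgraph w) == i.-1)
                  ad_word br x y w.

Definition is_restricted (br : V -> V -> V) (pm : V -> V) : Prop :=
  [/\ is_lie_bracket br,
      (forall x y, br (pm x) y = iter p (br x) y),
      (forall (a : K) x, pm (a *: x) = a ^+ p *: pm x) &
      (forall x y, pm (x + y) = pm x + pm y + \sum_(1 <= i < p) jacobson_s br i x y)].

Definition is_alg_hom (A B : algType K) (h : A -> B) : Prop :=
  [/\ (forall a u v, h (a *: u + v) = a *: h u + h v),
      (forall u v, h (u * v) = h u * h v) & h 1 = 1].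

Definition env_map (br : V -> V -> V) (A : algType K) (f : V -> A) : Prop :=
  (forall a x y, f (a *: x + y) = a *: f x + f y) /\
  (forall x y, f (br x y) = f x * f y - f y * f x).

Definition reduced_rel (pm : V -> V) (xi : V -> K) (A : algType K) (f : V -> A) : Prop :=
  forall x, f x ^+ p - f (pm x) = (xi x ^+ p)%:A.

(** (A, f) is the reduced enveloping algebra U_xi(V), i.e. U(V) modulo the ideal
    generated by x^p - x^[p] - xi(x)^p 1, characterised by its universal property.
    For xi = 0 this is the restricted enveloping algebra u(V). *)
Definition is_reduced_env (br : V -> V -> V) (pm : V -> V) (xi : V -> K)
    (A : algType K) (f : V -> A) : Prop :=
  [/\ env_map br f, reduced_rel pm xi f &
      forall (B : algType K) (g : V -> B), env_map br g -> reduced_rel pm xi g ->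
        exists h : A -> B, [/\ is_alg_hom h, (forall x, h (f x) = g x) &
          forall h' : A -> B, is_alg_hom h' -> (forall x, h' (f x) = g x) ->
            forall u, h' u = h u]].

End RestrictedLie.

(** The central extension l_chi = l (+) K c, as the vector space V * K. *)
Section Lchi.
Variables (K : fieldType) (p : nat) (V : vectType K).
Variables (br : V -> V -> V) (pm : V -> V) (chi : V -> K).

Definition br_chi (u v : (V * K^o)%type) : (V * K^o)%type := (br u.1 v.1, 0).
Definition pm_chi (u : (V * K^o)%type) : (V * K^o)%type :=
  (pm u.1, chi u.1 ^+ p + u.2 ^+ p).
End Lchi.

(* Main.v *)
Set Warnings "-notation-overridden,-ambiguous-paths,-deprecated,-masking-absolute-name".
Require Import Defs.
From HB Require Import structures.
From mathcomp Require Import all_boot all_order all_algebra.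
From Stdlib Require Import IndefiniteDescription FunctionalExtensionality.
Import GRing.Theory.
Local Open Scope ring_scope.
Set Implicit Arguments. Unset Strict Implicit. Unset Printing Implicit Defensive.

Record idem (K : fieldType) (A : algType K) := Idem { ival : A; ivalP : ival * ival == ival; ival0 : ival != 0 }.

Section Corner.
Variables (K : fieldType) (A : algType K) (E : idem A).
Local Notation e := (ival E).
Lemma cee : e * e = e. Proof. by apply/eqP; case: E. Qed.
Lemma ce0 : e != 0. Proof. by case: E. Qed.

Record corner := Corner { cval : A; cvalP : e * cval * e == cval }.
HB.instance Definition _ := [isSub for cval].
HB.instance Definition _ := [Choice of corner by <:].

Lemma cval_inj : injective cval. Proof. exact: val_inj. Qed.
Lemma cP a : e * (e * a * e) * e == e * a * e.
Proof. by rewrite !mulrA cee -!mulrA cee. Qed.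
Definition cin a := Corner (cP a).
Lemma cinK (c : corner) : cin (cval c) = c.
Proof. by apply: cval_inj => /=; apply/eqP; case: c. Qed.
Lemma cvalE (c : corner) : e * cval c * e = cval c.
Proof. by apply/eqP; case: c. Qed.

Lemma cvalL (c : corner) : e * cval c = cval c.
Proof. by rewrite -cvalE !mulrA cee. Qed.
Lemma cvalR (c : corner) : cval c * e = cval c.
Proof. by rewrite -cvalE -!mulrA cee. Qed.
Definition czero := cin 0.
Definition copp (c : corner) := cin (- cval c).
Definition cadd (c d : corner) := cin (cval c + cval d).
Lemma cvalD c d : cval (cadd c d) = cval c + cval d.
Proof. by rewrite /= mulrDr mulrDl !cvalE. Qed.
Lemma cvalN c : cval (copp c) = - cval c.
Proof. by rewrite /= mulrN mulNr !cvalE. Qed.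
Lemma cval0 : cval czero = 0.
Proof. by rewrite /= mulr0 mul0r. Qed.

Lemma caddA : associative cadd.
Proof. by move=> x y z; apply: cval_inj; rewrite !cvalD addrA. Qed.
Lemma caddC : commutative cadd.
Proof. by move=> x y; apply: cval_inj; rewrite !cvalD addrC. Qed.
Lemma cadd0 : left_id czero cadd.
Proof. by move=> x; apply: cval_inj; rewrite !cvalD cval0 add0r. Qed.
Lemma caddN : left_inverse czero copp cadd.
Proof. by move=> x; apply: cval_inj; rewrite !cvalD cvalN cval0 addNr. Qed.
HB.instance Definition _ := GRing.isZmodule.Build corner caddA caddC cadd0 caddN.

Definition cscale (k : K) (c : corner) := cin (k *: cval c).
Lemma cvalZ k c : cval (cscale k c) = k *: cval c.
Proof. by rewrite /= -scalerAr -scalerAl cvalE. Qed.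
Lemma cvalD' (c d : corner) : cval (c + d) = cval c + cval d.
Proof. exact: cvalD. Qed.
Lemma cscaleA a b v : cscale a (cscale b v) = cscale (a * b) v.
Proof. by apply: cval_inj; rewrite !cvalZ scalerA. Qed.
Lemma cscale1 : left_id 1 cscale.
Proof. by move=> v; apply: cval_inj; rewrite !cvalZ scale1r. Qed.
Lemma cscaleDr : right_distributive cscale +%R.
Proof. by move=> a u v; apply: cval_inj; rewrite cvalZ !cvalD' !cvalZ scalerDr. Qed.
Lemma cscaleDl v : {morph cscale^~ v: a b / a + b}.
Proof. by move=> a b; apply: cval_inj; rewrite cvalD' !cvalZ scalerDl. Qed.
HB.instance Definition _ := GRing.Zmodule_isLmodule.Build K corner cscaleA cscale1 cscaleDr cscaleDl.

Definition cone := cin e.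
Definition cmul (c d : corner) := cin (cval c * cval d).
Lemma cvalM c d : cval (cmul c d) = cval c * cval d.
Proof. by rewrite /= mulrA cvalL -mulrA cvalR. Qed.
Lemma cval1 : cval cone = e.
Proof. by rewrite /= !cee. Qed.
Lemma cmulA : associative cmul.
Proof. by move=> x y z; apply: cval_inj; rewrite !cvalM mulrA. Qed.
Lemma cmul1 : left_id cone cmul.
Proof. by move=> x; apply: cval_inj; rewrite cvalM cval1 cvalL. Qed.
Lemma cmulr1 : right_id cone cmul.
Proof. by move=> x; apply: cval_inj; rewrite cvalM cval1 cvalR. Qed.
Lemma cmulDl : left_distributive cmul +%R.
Proof. by move=> x y z; apply: cval_inj; rewrite cvalM !cvalD' !cvalM mulrDl. Qed.
Lemma cmulDr : right_distributive cmul +%R.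
Proof. by move=> x y z; apply: cval_inj; rewrite cvalM !cvalD' !cvalM mulrDr. Qed.
Lemma cone0 : cone != 0.
Proof. by apply: contra ce0 => /eqP/(congr1 cval); rewrite cval1 cval0 => ->. Qed.
HB.instance Definition _ := GRing.Zmodule_isNzRing.Build corner cmulA cmul1 cmulr1 cmulDl cmulDr cone0.
Lemma cscaleAl (a : K) (u v : corner) : a *: (u * v) = (a *: u) * v.
Proof. by apply: cval_inj; rewrite cvalZ !cvalM cvalZ scalerAl. Qed.
HB.instance Definition _ := GRing.Lmodule_isLalgebra.Build K corner cscaleAl.
Lemma cscaleAr (a : K) (u v : corner) : a *: (u * v) = u * (a *: v).
Proof. by apply: cval_inj; rewrite cvalZ !cvalM cvalZ scalerAr. Qed.
HB.instance Definition _ := GRing.Lalgebra_isAlgebra.Build K corner cscaleAr.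

Lemma cvalMul (c d : corner) : cval (c * d) = cval c * cval d. Proof. exact: cvalM. Qed.
Lemma cvalOne : cval (1 : corner) = e. Proof. exact: cval1. Qed.
Lemma cvalScale k (c : corner) : cval (k *: c) = k *: cval c. Proof. exact: cvalZ. Qed.
Lemma cvalAdd (c d : corner) : cval (c + d) = cval c + cval d. Proof. exact: cvalD. Qed.
Lemma cvalSub (c d : corner) : cval (c - d) = cval c - cval d.
Proof. by rewrite cvalAdd; rewrite [cval (- d)]cvalN. Qed.
Lemma cvalX (c : corner) n : cval (c ^+ n.+1) = cval c ^+ n.+1.
Proof. by elim: n => [|n IH]; rewrite ?expr1 // exprS cvalMul IH -exprS. Qed.
End Corner.
Section Poly.
Variables (K : fieldType) (p : nat) (chK : p \in [pchar K]).

Lemma p_prime : prime p. Proof. exact: pcharf_prime chK. Qed.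
Lemma p_gt1 : (1 < p)%N. Proof. exact: prime_gt1 p_prime. Qed.

Lemma natK_inj i j : (i < p)%N -> (j < p)%N -> (i%:R : K) = j%:R -> i = j.
Proof.
wlog le_ij : i j / (i <= j)%N => [H hi hj eij|hi hj eij].
  by case: (leqP i j) => [/H|/ltnW/H]; [apply|move=> H'; symmetry; apply: H'].
apply/eqP; rewrite eqn_leq le_ij /=.
have : (p %| j - i)%N by rewrite (dvdn_pcharf chK) natrB // eij subrr.
case: (posnP (j - i)) => [/eqP|]; first by rewrite subn_eq0.
move=> pos /(dvdn_leq pos) h; exfalso.
have : (j - i < p)%N by apply: leq_ltn_trans (leq_subr _ _) hj.
by rewrite ltnNge h.
Qed.

Lemma frobK (x : K) : x ^+ p = (pFrobenius_aut chK) x.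
Proof. by rewrite pFrobenius_autE. Qed.

Lemma nat_fix n : (n%:R : K) ^+ p = n%:R.
Proof. by rewrite frobK pFrobenius_aut_nat. Qed.

Lemma diff_fix i j : (i%:R - j%:R : K) ^+ p = i%:R - j%:R.
Proof. by rewrite frobK rmorphB /= -!frobK !nat_fix. Qed.

Lemma fix_pow1 (x : K) : x != 0 -> x ^+ p = x -> x ^+ p.-1 = 1.
Proof.
move=> x0 hx; apply: (mulfI x0); rewrite mulr1 -exprS prednK ?hx //.
exact: ltnW p_gt1.
Qed.

Definition E (i : nat) : {poly K} := 1 - ('X - (i%:R)%:P) ^+ p.-1.

Lemma E_eval (i j : 'I_p) : (E i).[j%:R] = (i == j)%:R.
Proof.
rewrite /E !hornerE.
case: eqP => [->|nij].
  by rewrite subrr expr0n /= -subn1 subn_eq0 leqNgt p_gt1 subr0.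
rewrite fix_pow1 ?subrr // ?diff_fix //.
rewrite subr_eq0; apply/eqP => /natK_inj; rewrite !ltn_ord => /(_ isT isT) /val_inj.
by move=> h; apply: nij.
Qed.

Definition rs : seq K := [seq (j%:R : K) | j <- iota 0 p].
Definition Pi : {poly K} := \prod_(x <- rs) ('X - x%:P).

Lemma rs_uniq : uniq_roots rs.
Proof.
rewrite uniq_rootsE map_inj_in_uniq ?iota_uniq //.
by move=> i j; rewrite !mem_iota !add0n => /andP[_ hi] /andP[_ hj]; apply: natK_inj.
Qed.

Lemma factor_all (P : {poly K}) :
  (forall j : 'I_p, P.[j%:R] = 0) -> exists q, P = q * Pi.
Proof.
move=> H; apply: uniq_roots_prod_XsubC rs_uniq.
apply/allP => x /mapP [j]; rewrite mem_iota add0n => /andP[_ hj] ->.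
by apply/rootP; apply: (H (Ordinal hj)).
Qed.

Lemma Pi_eq : Pi = 'X^p - 'X.
Proof.
have [q hq] : exists q, 'X^p - 'X = q * Pi.
  apply: factor_all => j; rewrite !hornerE nat_fix subrr //.
have sX : (size (- ('X : {poly K})) < size ('X^p : {poly K}))%N.
  by rewrite size_polyXn size_polyN size_polyX ltnS p_gt1.
have lc : lead_coef ('X^p - 'X : {poly K}) = 1 by rewrite lead_coefDl // lead_coefXn.
have mPi : Pi \is monic by apply: monic_prod_XsubC.
have q0 : q != 0.
  by apply/eqP => q0; move: lc; rewrite hq q0 mul0r lead_coef0 => /eqP; rewrite eq_sym oner_eq0.
have : size ('X^p - 'X : {poly K}) = size (q * Pi) by rewrite -hq.
rewrite size_Mmonic // size_prod_XsubC size_map size_iota size_polyDl // size_polyXn.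
move=> h; have sq : size q = 1%N by move: h; rewrite addnS /= => h; apply/eqP; rewrite -(eqn_add2r p) add1n h.
have : lead_coef ('X^p - 'X : {poly K}) = lead_coef (q * Pi) by rewrite -hq.
rewrite lc lead_coef_Mmonic // => lq.
have lq1 : lead_coef q = 1 by rewrite -lq.
rewrite hq; have -> : q = 1.
  have q01 : q`_0 = 1 by move: lq1; rewrite /lead_coef sq.
  by rewrite [q]size1_polyC ?sq // q01.
by rewrite mul1r.
Qed.

Variables (A : algType K) (z : A) (zp : z ^+ p = z).
Local Notation ev := (horner_alg z).

Lemma ev_zero (P : {poly K}) : (forall j : 'I_p, P.[j%:R] = 0) -> ev P = 0.
Proof.
move=> /factor_all [q ->]; rewrite rmorphM /= Pi_eq rmorphB /= rmorphXn /= horner_algX zp.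
by rewrite subrr mulr0.
Qed.

Lemma ev_comm (P Q : {poly K}) : ev P * ev Q = ev Q * ev P.
Proof. by rewrite -!rmorphM /= mulrC. Qed.

End Poly.
Section AlgHom.
Variables (K : fieldType) (A B : algType K) (h : A -> B) (hh : is_alg_hom h).

Lemma ahD u v : h (u + v) = h u + h v.
Proof. by move: hh; rewrite /is_alg_hom => -[H _ _]; rewrite -{1}[u]scale1r H scale1r. Qed.
Lemma ah0 : h 0 = 0.
Proof. have H := ahD 0 0; rewrite addr0 in H; by apply: (addrI (h 0)); rewrite addr0 -H. Qed.
Lemma ahZ k u : h (k *: u) = k *: h u.
Proof. by move: hh => -[H _ _]; rewrite -[k *: u]addr0 H ah0 addr0. Qed.
Lemma ahN u : h (- u) = - h u.
Proof. by rewrite -scaleN1r ahZ scaleN1r. Qed.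
Lemma ahB u v : h (u - v) = h u - h v.
Proof. by rewrite ahD ahN. Qed.
Lemma ahM u v : h (u * v) = h u * h v.
Proof. by move: hh => -[_ H _]. Qed.
Lemma ah1 : h 1 = 1.
Proof. by move: hh => -[_ _ H]. Qed.
Lemma ahA k : h (k%:A) = k%:A.
Proof. by rewrite ahZ ah1. Qed.
Lemma ah_sum (I : Type) (r : seq I) (P : pred I) F :
  h (\sum_(i <- r | P i) F i) = \sum_(i <- r | P i) h (F i).
Proof. exact: (big_morph _ ahD ah0). Qed.

Lemma ah_ev (z : A) (c : K) (P : {poly K}) : h z = c%:A -> h (horner_alg z P) = (P.[c])%:A.
Proof.
move=> hz; elim/poly_ind: P => [|P d IH].
  by rewrite rmorph0 ah0 horner0 scale0r.
rewrite rmorphD rmorphM /= horner_algX horner_algC ahD ahM IH hz ahA.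
by rewrite !hornerE mulr_algl scalerA scalerDl.
Qed.
End AlgHom.
Section EnvFacts.
Variables (K : fieldType) (V : vectType K) (br : V -> V -> V) (A : algType K) (f : V -> A).
Hypothesis hf : env_map br f.
Lemma efD u v : f (u + v) = f u + f v.
Proof. by case: hf => H _; rewrite -{1}[u]scale1r H scale1r. Qed.
Lemma ef0 : f 0 = 0.
Proof. have H := efD 0 0; rewrite addr0 in H; by apply: (addrI (f 0)); rewrite addr0 -H. Qed.
Lemma efZ k u : f (k *: u) = k *: f u.
Proof. by case: hf => H _; rewrite -[k *: u]addr0 H ef0 addr0. Qed.
Lemma efbr x y : f (br x y) = f x * f y - f y * f x.
Proof. by case: hf. Qed.
End EnvFacts.

Lemma br0l (K : fieldType) (V : vectType K) (br : V -> V -> V) : is_lie_bracket br ->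
  forall y, br 0 y = 0.
Proof.
case=> H _ _ _ y; have := H 1 0 0 y; rewrite !scale1r addr0 => E.
by apply: (addrI (br 0 y)); rewrite addr0 -E.
Qed.

Lemma zl (V : zmodType) (X Y P Q S : V) : X + P + (Q + S) - (Y + Q + (P + S)) = X - Y.
Proof.
have -> : Y + Q + (P + S) = (P + (Q + S)) + Y by rewrite [LHS]addrC [Y + Q]addrC addrA -(addrA P S Q) (addrC S Q).
by rewrite opprD addrA -(addrA X) addrK.
Qed.

Lemma comm_shift (K : fieldType) (B : algType K) (x y : B) (a b : K) :
  (x + a%:A) * (y + b%:A) - (y + b%:A) * (x + a%:A) = x * y - y * x.
Proof.
rewrite !mulrDl !mulrDr !mulr_algl !mulr_algr !scalerA [b * a]mulrC.
exact: zl.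
Qed.

Lemma alg_exp (K : fieldType) (B : algType K) (c : K) n : (c%:A : B) ^+ n = (c ^+ n)%:A.
Proof. by rewrite -[c%:A]/(in_alg B c) -rmorphXn. Qed.

Lemma frob_shift (K : fieldType) (p : nat) (chK : p \in [pchar K]) (B : algType K) (x : B) (c : K) :
  (x + c%:A) ^+ p = x ^+ p + (c ^+ p)%:A.
Proof.
have chB : p \in [pchar B] by rewrite (pchar_lalg B).
rewrite -(pFrobenius_autE chB) pFrobenius_autD_comm; last exact/esym/comm_alg.
by rewrite !pFrobenius_autE alg_exp.
Qed.

Section Main.
Variables (K : fieldType) (p : nat) (chK : p \in [pchar K])
  (L : vectType K) (br : L -> L -> L) (pm : L -> L)
  (restr : is_restricted p br pm)
  (chi : {scalar L})
  (A : algType K) (f : (L * K^o)%type -> A)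
  (hA : is_reduced_env p (br_chi br) (pm_chi p pm chi) (fun _ => 0) f)
  (B : 'I_p -> algType K) (g : forall i : 'I_p, L -> B i)
  (hB : forall i : 'I_p, is_reduced_env p br pm (fun x => (i%:R : K) * chi x) (g i)).

Lemma p_gt0 : (0 < p)%N. Proof. exact: ltnW (p_gt1 chK). Qed.

Lemma fenv : env_map (br_chi br) f. Proof. by case: hA. Qed.
Lemma fred : reduced_rel p (pm_chi p pm chi) (fun _ => 0) f. Proof. by case: hA. Qed.

Lemma pm0 : pm 0 = 0.
Proof. case: restr => _ _ H _; have := H 0 0; rewrite scale0r expr0n /= eqn0Ngt p_gt0 scale0r //. Qed.

Definition z := f (0, 1).

Lemma fsplit x (a : K) : f (x, a) = f (x, 0) + a *: z.
Proof.
rewrite /z -(efZ fenv) -(efD fenv); congr f.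
by apply: injective_projections => /=; rewrite ?scaler0 ?addr0 // add0r; symmetry; exact: mulr1.
Qed.

Lemma lie : is_lie_bracket br. Proof. by case: restr. Qed.

Lemma zcomm v : z * f v = f v * z.
Proof.
apply/eqP; rewrite -subr_eq0 /z -(efbr fenv).
have -> : br_chi br (0, 1) v = 0 by rewrite /br_chi /= (br0l lie).
by rewrite (ef0 fenv).
Qed.

Lemma z0 : (0:K) ^+ p = 0.
Proof. by rewrite expr0n eqn0Ngt p_gt0. Qed.

Lemma zp : z ^+ p = z.
Proof.
have := fred (0, 1); rewrite /pm_chi /= pm0 raddf0 z0 expr1n add0r.
by rewrite scale0r /z => /eqP; rewrite subr_eq0 => /eqP.
Qed.

Lemma fpow x : f (x, 0) ^+ p = f (pm x, 0) + (chi x ^+ p) *: z.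
Proof.
have := fred (x, 0); rewrite /pm_chi /= z0 addr0 scale0r.
by move=> /eqP; rewrite subr_eq0 => /eqP ->; rewrite fsplit.
Qed.

Local Notation ev := (horner_alg z).
Definition e (i : 'I_p) := ev (E K p i).

Lemma ev_commute (y : A) P : y * z = z * y -> y * ev P = ev P * y.
Proof.
move=> yz; elim/poly_ind: P => [|P c IH]; first by rewrite rmorph0 mulr0 mul0r.
rewrite rmorphD rmorphM /= horner_algX horner_algC mulrDr mulrDl.
by rewrite mulrA IH -(mulrA _ y) yz mulrA (comm_alg c y).
Qed.

Lemma e_commf i v : e i * f v = f v * e i.
Proof. by rewrite (ev_commute _ (esym (zcomm v))). Qed.

Lemma e_commz i : e i * z = z * e i.
Proof. by rewrite (ev_commute _ (erefl (z * z))). Qed.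

Lemma ev0 P : (forall j : 'I_p, P.[j%:R] = 0) -> ev P = 0.
Proof. have := @ev_zero K p chK A z zp P. exact. Qed.

Lemma ee i j : e i * e j = ((i == j)%:R : K) *: e i.
Proof.
apply/eqP; rewrite -subr_eq0 /e -rmorphM /= -mulr_algl -(horner_algC z) -rmorphM -rmorphB /=; apply/eqP.
apply: ev0 => k; rewrite hornerD hornerN hornerM hornerCM !(E_eval chK).
have [eik|nik] := eqVneq i k; have [ejk|njk] := eqVneq j k; rewrite ?eik ?ejk.
- by rewrite ?eqxx /= ?mulr1 ?mul1r ?mulr0 ?mul0r ?subrr.
- by rewrite eq_sym (negPf njk) /= ?mulr1 ?mul1r ?mulr0 ?mul0r ?subrr.
- by rewrite ?(negPf nik) /= ?mulr1 ?mul1r ?mulr0 ?mul0r ?subrr.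
- by rewrite ?(negPf nik) /= ?mulr1 ?mul1r ?mulr0 ?mul0r ?subrr.
Qed.

Lemma esum : \sum_(i < p) e i = 1.
Proof.
apply/eqP; rewrite -subr_eq0 /e -rmorph_sum -(rmorph1 (horner_alg z)) -rmorphB /=; apply/eqP.
apply: ev0 => k; rewrite hornerD hornerN horner_sum.
under eq_bigr do rewrite (E_eval chK).
by rewrite (bigD1 k) //= eqxx big1 ?addr0 ?hornerE ?subrr // => i /negPf ->.
Qed.

Lemma ze i : z * e i = (i%:R : K) *: e i.
Proof.
apply/eqP; rewrite -subr_eq0 /e -{1}(horner_algX z) -rmorphM /= -mulr_algl -(horner_algC z) -rmorphM -rmorphB /=; apply/eqP.
apply: ev0 => k; rewrite hornerD hornerN hornerM hornerX hornerCM (E_eval chK).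
by case: (i =P k) => [->|]; rewrite ?mulr0 ?subrr.
Qed.

Lemma genv (i : 'I_p) : env_map br (g i). Proof. by case: (hB i). Qed.
Lemma gred (i : 'I_p) : reduced_rel p pm (fun x => (i%:R : K) * chi x) (g i). Proof. by case: (hB i). Qed.

Definition gp (i : 'I_p) (u : (L * K^o)%type) : B i := g i u.1 + (u.2 * i%:R)%:A.

Lemma gp_env (i : 'I_p) : env_map (br_chi br) (gp i).
Proof.
split.
- move=> a u v; rewrite /gp /= (efD (genv i)) (efZ (genv i)).
  by rewrite -[a *: u.2]/(a * u.2) mulrDl scalerDl -mulrA -scalerA scalerDr addrACA.
- move=> u v; rewrite /gp /br_chi /= mul0r scale0r addr0 comm_shift (efbr (genv i)) //.
Qed.

Lemma gp_red (i : 'I_p) : reduced_rel p (pm_chi p pm chi) (fun _ => 0) (gp i).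
Proof.
move=> [x a]; rewrite /gp /pm_chi /= z0 scale0r (frob_shift chK).
have := gred i x => /eqP; rewrite subr_eq => /eqP ->.
rewrite (addrC _ (g i (pm x))) -(addrA (g i (pm x))) -scalerDl.
have -> : (i%:R * chi x) ^+ p + (a * i%:R) ^+ p = (chi x ^+ p + a ^+ p) * i%:R.
  by rewrite !exprMn (nat_fix chK) mulrDl mulrC.
by rewrite subrr.
Qed.

Lemma funiv : forall (B' : algType K) (g' : (L * K^o)%type -> B'),
  env_map (br_chi br) g' -> reduced_rel p (pm_chi p pm chi) (fun _ => 0) g' ->
  exists h : A -> B', [/\ is_alg_hom h, (forall x, h (f x) = g' x) &
    forall h' : A -> B', is_alg_hom h' -> (forall x, h' (f x) = g' x) -> forall u, h' u = h u].
Proof. by case: hA. Qed.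

Definition phi (i : 'I_p) : A -> B i :=
  proj1_sig (constructive_indefinite_description _ (funiv (gp_env i) (gp_red i))).

Lemma phiP (i : 'I_p) : [/\ is_alg_hom (phi i), (forall x, phi i (f x) = gp i x) &
    forall h' : A -> B i, is_alg_hom h' -> (forall x, h' (f x) = gp i x) -> forall u, h' u = phi i u].
Proof. exact: (proj2_sig (constructive_indefinite_description _ (funiv (gp_env i) (gp_red i)))). Qed.

Lemma phi_hom i : is_alg_hom (phi i). Proof. by case: (phiP i). Qed.
Lemma phi_f i x : phi i (f x) = gp i x. Proof. by case: (phiP i). Qed.

Lemma phi_z (j : 'I_p) : phi j z = (j%:R : K)%:A.
Proof. by rewrite /z phi_f /gp /= (ef0 (genv j)) add0r mul1r. Qed.

Lemma phi_e (i j : 'I_p) : phi j (e i) = ((i == j)%:R : K)%:A.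
Proof. by rewrite /e (ah_ev (phi_hom j) _ (phi_z j)) (E_eval chK). Qed.

Lemma e_idem i : e i * e i == e i.
Proof. by rewrite ee eqxx scale1r. Qed.

Lemma e_nz i : e i != 0.
Proof.
apply/eqP => h; have := phi_e i i; rewrite h (ah0 (phi_hom i)) eqxx scale1r.
by move/eqP; rewrite eq_sym oner_eq0.
Qed.

Definition Ei (i : 'I_p) : idem A := Idem (e_idem i) (e_nz i).
Definition C (i : 'I_p) := corner (Ei i).
Definition G (i : 'I_p) (x : L) : C i := cin (Ei i) (f (x, 0)).

Lemma Gval i x : cval (G i x) = e i * f (x, 0).
Proof. by rewrite /= -mulrA -e_commf mulrA (eqP (e_idem i)). Qed.

Lemma fpair (a : K) x y : f (a *: x + y, 0) = a *: f (x, 0) + f (y, 0).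
Proof.
rewrite -(efZ fenv) -(efD fenv); congr f.
by apply: injective_projections => /=; rewrite ?scaler0 ?addr0 //; symmetry; exact: mulr0.
Qed.

Lemma cvalXp (E' : idem A) (c : corner E') : cval (c ^+ p) = cval c ^+ p.
Proof. by case: p p_gt0 => [//|n] _; exact: cvalX. Qed.

Lemma eXp i (y : A) n : e i * y = y * e i -> (e i * y) ^+ n.+1 = e i * y ^+ n.+1.
Proof.
move=> ey; elim: n => [|n IH]; first by rewrite !expr1.
by rewrite exprS IH mulrA -(mulrA (e i)) -ey mulrA (eqP (e_idem i)) -mulrA -exprS.
Qed.

Lemma G_env i : env_map br (G i).
Proof.
split.
- move=> a x y; apply: cval_inj; rewrite cvalAdd cvalScale !Gval fpair.
  by rewrite mulrDr scalerAr.
- move=> x y; apply: cval_inj; rewrite cvalSub !cvalMul !Gval.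
  have -> : f (br x y, 0) = f (x, 0) * f (y, 0) - f (y, 0) * f (x, 0).
    by rewrite -(efbr fenv) /br_chi.
  rewrite mulrBr !mulrA -!(mulrA (e i)) -!e_commf !mulrA (eqP (e_idem i)).
  by [].
Qed.

Lemma G_red (i : 'I_p) : reduced_rel p pm (fun x => (i%:R : K) * chi x) (G i).
Proof.
move=> x; apply: cval_inj; rewrite cvalSub cvalXp cvalScale cvalOne !Gval.
have -> : (e i * f (x, 0)) ^+ p = e i * f (x, 0) ^+ p.
  by have := eXp p.-1 (e_commf i (x, 0)); rewrite prednK ?p_gt0.
rewrite fpow mulrDr addrAC subrr add0r -scalerAr e_commz ze scalerA exprMn (nat_fix chK).
by rewrite mulrC.
Qed.

Lemma guniv (i : 'I_p) : forall (B' : algType K) (g' : L -> B'),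
  env_map br g' -> reduced_rel p pm (fun x => (i%:R : K) * chi x) g' ->
  exists h : B i -> B', [/\ is_alg_hom h, (forall x, h (g i x) = g' x) &
    forall h' : B i -> B', is_alg_hom h' -> (forall x, h' (g i x) = g' x) -> forall u, h' u = h u].
Proof. by case: (hB i). Qed.

Definition psi (i : 'I_p) : B i -> C i :=
  proj1_sig (constructive_indefinite_description _ (guniv (G_env i) (G_red i))).
Arguments psi : clear implicits.

Lemma psiP (i : 'I_p) : [/\ is_alg_hom (psi i), (forall x, psi i (g i x) = G i x) &
    forall h' : B i -> C i, is_alg_hom h' -> (forall x, h' (g i x) = G i x) -> forall u, h' u = psi i u].
Proof. exact: (proj2_sig (constructive_indefinite_description _ (guniv (G_env i) (G_red i)))). Qed.

Lemma psi_hom (i : 'I_p) : is_alg_hom (psi i). Proof. by case: (psiP i). Qed.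
Lemma psi_g (i : 'I_p) x : psi i (g i x) = G i x. Proof. by case: (psiP i). Qed.

Definition Psi (b : forall i : 'I_p, B i) : A := \sum_(i < p) cval (psi i (b i)).

Lemma phi_off (i j : 'I_p) (c : C i) : i != j -> phi j (cval c) = 0.
Proof.
move=> nij; rewrite -(cvalL c) (ahM (phi_hom j)) /=.
by rewrite phi_e (negPf nij) scale0r mul0r.
Qed.

Lemma phi_diag (j : 'I_p) (u : B j) : phi j (cval (psi j u)) = u.
Proof.
have [h0 [_ _ U]] := guniv (genv j) (gred j).
have idh : is_alg_hom (fun u : B j => u) by split.
have hh : is_alg_hom (fun u => phi j (cval (psi j u))).
  split.
  - move=> a u1 u2; case: (psi_hom j) => -> _ _.
    by rewrite cvalAdd cvalScale; case: (phi_hom j) => -> _ _.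
  - by move=> u1 u2; rewrite (ahM (psi_hom j)) cvalMul (ahM (phi_hom j)).
  - by rewrite (ah1 (psi_hom j)) cvalOne phi_e eqxx scale1r.
have gen : forall x, phi j (cval (psi j (g j x))) = g j x.
  move=> x; rewrite psi_g Gval (ahM (phi_hom j)) phi_e eqxx scale1r mul1r phi_f /gp /=.
  by rewrite mul0r scale0r addr0.
have E1 := U _ hh gen u; have E2 := U _ idh (fun x => erefl) u.
exact: (etrans E1 (esym E2)).
Qed.

Lemma surj b (j : 'I_p) : phi j (Psi b) = b j.
Proof.
rewrite /Psi (ah_sum (phi_hom j)) (bigD1 j) //= phi_diag big1 ?addr0 //.
by move=> i nij; apply: phi_off.
Qed.

Lemma zsum : \sum_(i < p) (i%:R : K) *: e i = z.
Proof.
by rewrite -[RHS]mulr1 -esum mulr_sumr; apply: eq_bigr => i _; rewrite ze.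
Qed.

Lemma cross (i j : 'I_p) (c : C i) (d : C j) : i != j -> cval c * cval d = 0.
Proof.
move=> nij; rewrite -(cvalR c) -(cvalL d) /= mulrA -(mulrA _ (e i)) ee (negPf nij).
by rewrite scale0r mulr0 mul0r.
Qed.

Lemma inj a a' : (forall i, phi i a = phi i a') -> a = a'.
Proof.
move=> H.
pose T := fun a => Psi (fun i => phi i a).
have [h0 [_ _ U]] := funiv fenv fred.
have idh : is_alg_hom (fun u : A => u) by split.
have hh : is_alg_hom T.
  split.
  - move=> k u v; rewrite /T /Psi scaler_sumr -big_split; apply: eq_bigr => i _ /=.
    case: (phi_hom i) => -> _ _; case: (psi_hom i) => -> _ _.
    by rewrite cvalAdd cvalScale.
  - move=> u v; rewrite /T /Psi mulr_suml; apply: eq_bigr => i _ /=.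
    rewrite mulr_sumr (bigD1 i) //= big1 ?addr0.
      by rewrite (ahM (phi_hom i)) (ahM (psi_hom i)) cvalMul.
    by move=> j nji; apply: cross; rewrite eq_sym.
  - rewrite /T /Psi -[RHS]esum; apply: eq_bigr => i _.
    by rewrite (ah1 (phi_hom i)) (ah1 (psi_hom i)) cvalOne.
have gen : forall x, T (f x) = f x.
  move=> [x al]; rewrite /T /Psi [RHS]fsplit.
  under eq_bigr do rewrite phi_f /gp /= (ahD (psi_hom _)) psi_g (ahA (psi_hom _)) cvalAdd Gval cvalScale cvalOne.
  rewrite big_split /= -mulr_suml esum mul1r; congr (_ + _).
  by rewrite -zsum scaler_sumr; apply: eq_bigr => i _; rewrite scalerA.
have E1 := U _ hh gen; have E2 := U _ idh (fun x => erefl).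
have Ta : T a = a := etrans (E1 a) (esym (E2 a)).
have Ta' : T a' = a' := etrans (E1 a') (esym (E2 a')).
rewrite -Ta -Ta' /T; congr Psi.
by apply: functional_extensionality_dep => i; exact: H.
Qed.

Lemma main_ex : exists phi : forall i : 'I_p, A -> B i,
    [/\ (forall i, is_alg_hom (phi i)),
        (forall a a' : A, (forall i, phi i a = phi i a') -> a = a') &
        (forall b : forall i : 'I_p, B i, exists a : A, forall i, phi i a = b i)].
Proof.
exists phi; split; [exact: phi_hom | exact: inj | move=> b; exists (Psi b) => i; exact: surj].
Qed.

End Main.


Unset Implicit Arguments.

Theorem corollary1p3p5 (K : closedFieldType) (p : nat) (pchar_p : p \in [pchar K])
  (L : vectType K) (br : L -> L -> L) (pm : L -> L)
  (restr : is_restricted p br pm)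
  (chi : {scalar L})
  (* A = u(l_chi) *)
  (A : algType K) (f : (L * K^o)%type -> A)
  (hA : is_reduced_env p (br_chi br) (pm_chi p pm chi) (fun _ => 0) f)
  (* B i = U_{i chi}(l), i ranging over the prime field F = {0,...,p-1} *)
  (B : 'I_p -> algType K) (g : forall i : 'I_p, L -> B i)
  (hB : forall i : 'I_p, is_reduced_env p br pm (fun x => (i%:R : K) * chi x) (g i)) :
  exists phi : forall i : 'I_p, A -> B i,
    [/\ (forall i, is_alg_hom (phi i)),
        (forall a a' : A, (forall i, phi i a = phi i a') -> a = a') &
        (forall b : forall i : 'I_p, B i, exists a : A, forall i, phi i a = b i)].
Proof. exact: (main_ex pchar_p restr hA hB). Qed.
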